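(* Let $A \in \mathbb{R}^{m\times n}$ and $W \in \mathbb{R}^{q\times m}$ be matrices, and let $B^\sharp\colon \mathbb{R}^m\to\mathbb{R}^n$ be a fixed measurable map. Let $X$ be a random vector in $\mathbb{R}^n$ and $\Xi, N$ random vectors in $\mathbb{R}^m$, all with finite second moments, such that the triples $(X,\Xi,N)$ and $(X,N,\Xi)$ have the same joint distribution (for instance, $\Xi$ and $N$ i.i.d. and independent of $X$). Set $Y = AX + \Xi$ and $Z = Y + N$. Let $\mathcal{F}$ be the set of measurable functions $f\colon\mathbb{R}^n\to\mathbb{R}^n$ with $\mathbb{E}\|WA[f(B^\sharp(Z))]\|_2^2<\infty$. Then $$\operatorname*{argmin}_{f\in\mathcal{F}} \mathbb{E}\,\big\|WA[f\circ B^\sharp(Z)] - WAX\big\|_2^2 \;=\; \operatorname*{argmin}_{f\in\mathcal{F}} \mathbb{E}\,\big\|WA[f\circ B^\sharp(Z)] - W(2Y-Z)\big\|_2^2 .$$ More precisely, for every $f\in\mathcal{F}$, $$\mathbb{E}\|WA[f\circ B^\sharp(Z)] - W(2Y-Z)\|_2^2 = \mathbb{E}\|WA[f\circ B^\sharp(Z)] - WAX\|_2^2 - \mathbb{E}\|WAX\|_2^2 + \mathbb{E}\|W(2Y-Z)\|_2^2 .$$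
   Context: Model: $Y = AX+\Xi$ is the noisy measurement of the unknown image $X$ under the linear forward operator $A$ with additive noise $\Xi$; $Z = Y+N$ is ''noisier'' data obtained by adding an independent copy-type noise $N$. $\|\cdot\|_2$ is the Euclidean norm. *)

(* Defs.v *)
(* Vectors of R^k are represented as
   k.-tuple R, which carries the product (= Borel) sigma-algebra of
   mathcomp-analysis (measure_tuple_display). *)
From HB Require Import structures.
From mathcomp Require Import all_boot all_order all_algebra.
From mathcomp Require Import all_classical all_reals all_analysis.
Set Implicit Arguments. Unset Strict Implicit. Unset Printing Implicit Defensive.
Import Order.TTheory GRing.Theory Num.Theory.
Local Open Scope ring_scope.

Section vecops.
Variable R : realType.

Definition tmv p k (M : 'M[R]_(p, k)) (x : k.-tuple R) : p.-tuple R :=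
  [tuple \sum_(j < k) M i j * tnth x j | i < p].

Definition tadd k (x y : k.-tuple R) : k.-tuple R :=
  [tuple tnth x i + tnth y i | i < k].

Definition tsub k (x y : k.-tuple R) : k.-tuple R :=
  [tuple tnth x i - tnth y i | i < k].

Definition sqnorm k (x : k.-tuple R) : R := \sum_(i < k) tnth x i ^+ 2.
End vecops.

(* Main.v *)
Require Import Defs.
From HB Require Import structures.
From mathcomp Require Import all_boot all_order all_algebra.
From mathcomp Require Import all_classical all_reals all_analysis.
From mathcomp Require Import measurable_realfun.
From mathcomp Require Import ring lra.
Set Implicit Arguments. Unset Strict Implicit. Unset Printing Implicit Defensive.
Import Order.TTheory GRing.Theory Num.Theory.
Local Open Scope classical_set_scope.
Local Open Scope ring_scope.

Section meas.
Context (R : realType) (d0 : measure_display) (T0 : measurableType d0).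

Lemma m_tmv p k (M : 'M[R]_(p,k)) (g : T0 -> k.-tuple R) :
  measurable_fun setT g -> measurable_fun setT (fun t => tmv M (g t)).
Proof.
move=> mg; apply/measurable_fun_tnthP => i /=.
rewrite /comp; under eq_fun do rewrite /tmv tnth_mktuple.
apply: measurable_sum => j; apply: measurable_funM => //.
apply: (measurableT_comp (measurable_tnth j)) => //.
Qed.

Lemma m_tadd k (g h : T0 -> k.-tuple R) :
  measurable_fun setT g -> measurable_fun setT h ->
  measurable_fun setT (fun t => tadd (g t) (h t)).
Proof.
move=> mg mh; apply/measurable_fun_tnthP => i /=.
rewrite /comp; under eq_fun do rewrite /tadd tnth_mktuple.
apply: measurable_funD; apply: (measurableT_comp (measurable_tnth i)) => //.
Qed.

Lemma m_tsub k (g h : T0 -> k.-tuple R) :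
  measurable_fun setT g -> measurable_fun setT h ->
  measurable_fun setT (fun t => tsub (g t) (h t)).
Proof.
move=> mg mh; apply/measurable_fun_tnthP => i /=.
rewrite /comp; under eq_fun do rewrite /tsub tnth_mktuple.
apply: measurable_funB; apply: (measurableT_comp (measurable_tnth i)) => //.
Qed.

Lemma m_sqnorm k (g : T0 -> k.-tuple R) :
  measurable_fun setT g -> measurable_fun setT (fun t => sqnorm (g t)).
Proof.
move=> mg; rewrite /sqnorm; apply: measurable_sum => j.
apply: measurable_funX; apply: (measurableT_comp (measurable_tnth j)) => //.
Qed.

Lemma m_sqnormE k (g : T0 -> k.-tuple R) :
  measurable_fun setT g -> measurable_fun setT (fun t => (sqnorm (g t))%:E).
Proof. by move=> mg; apply/measurable_EFinP; exact: m_sqnorm. Qed.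
End meas.

Section alg.
Context (R : realType).

Lemma tnth_tmv p k (M : 'M[R]_(p,k)) x i :
  tnth (tmv M x) i = \sum_(j < k) M i j * tnth x j.
Proof. by rewrite /tmv tnth_mktuple. Qed.
Lemma tnth_tadd k (x y : k.-tuple R) i : tnth (tadd x y) i = tnth x i + tnth y i.
Proof. by rewrite /tadd tnth_mktuple. Qed.
Lemma tnth_tsub k (x y : k.-tuple R) i : tnth (tsub x y) i = tnth x i - tnth y i.
Proof. by rewrite /tsub tnth_mktuple. Qed.

Lemma sqnorm_ge0 k (x : k.-tuple R) : 0 <= sqnorm x.
Proof. by apply: sumr_ge0 => i _; exact: sqr_ge0. Qed.

Lemma sq_sum_le k (y : 'I_k -> R) :
  (\sum_(j < k) y j) ^+ 2 <= k%:R * \sum_(j < k) y j ^+ 2.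
Proof.
have H : 2 * (\sum_(j < k) y j) ^+ 2 <=
   \sum_(i < k) \sum_(j < k) (y i ^+ 2 + y j ^+ 2).
  rewrite expr2 big_distrl /= mulr_sumr; apply: ler_sum => i _.
  rewrite big_distrr /= mulr_sumr; apply: ler_sum => j _.
  have := sqr_ge0 (y i - y j); rewrite sqrrB => H.
  rewrite -subr_ge0. have -> : y i ^+ 2 + y j ^+ 2 - 2 * (y i * y j) = y i ^+ 2 - y i * y j *+ 2 + y j ^+ 2 by rewrite -mulr_natl; ring.
  exact H.
have E : \sum_(i < k) \sum_(j < k) (y i ^+ 2 + y j ^+ 2) =
   2 * (k%:R * \sum_(j < k) y j ^+ 2).
  rewrite (eq_bigr (fun i => y i ^+ 2 *+ k + \sum_(j < k) y j ^+ 2)); last first.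
    by move=> i _; rewrite big_split /= sumr_const card_ord.
  rewrite big_split /= sumrMnl.
  set S := \sum_(j < k) y j ^+ 2.
  rewrite sumr_const card_ord -[S *+ k]mulr_natl.
  ring.
move: H; rewrite E ler_pM2l //.
Qed.

Definition cM {p k} (M : 'M[R]_(p,k)) : R :=
  (p * k)%:R * \sum_(i < p) \sum_(j < k) M i j ^+ 2.

Lemma cM_ge0 p k (M : 'M[R]_(p,k)) : 0 <= cM M.
Proof.
apply: mulr_ge0 => //; apply: sumr_ge0 => i _; apply: sumr_ge0 => j _.
exact: sqr_ge0.
Qed.

Lemma sqnorm_tmv_le p k (M : 'M[R]_(p,k)) x :
  sqnorm (tmv M x) <= cM M * sqnorm x.
Proof.
set S := \sum_(i < p) \sum_(j < k) M i j ^+ 2.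
have MS i j : M i j ^+ 2 <= S.
  rewrite /S (bigD1 i) //= (bigD1 j) //= -addrA lerDl.
  apply: addr_ge0; first by apply: sumr_ge0 => *; exact: sqr_ge0.
  by apply: sumr_ge0 => *; apply: sumr_ge0 => *; exact: sqr_ge0.
have S0 : 0 <= S by apply: sumr_ge0 => *; apply: sumr_ge0 => *; exact: sqr_ge0.
rewrite /sqnorm.
apply: (@le_trans _ _ (\sum_(i < p) (k%:R * (S * \sum_(j < k) tnth x j ^+ 2)))).
  apply: ler_sum => i _; rewrite tnth_tmv.
  apply: (@le_trans _ _ (k%:R * \sum_(j < k) (M i j * tnth x j) ^+ 2)).
  move: (@sq_sum_le k (fun j => M i j * tnth x j)) => /= HH. exact: HH.
  apply: ler_wpM2l => //; rewrite mulr_sumr; apply: ler_sum => j _.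
  by rewrite exprMn; apply: ler_wpM2r => //; exact: sqr_ge0.
rewrite sumr_const card_ord /cM -/S natrM -[_ *+ p]mulr_natl.
by rewrite !mulrA.
Qed.

Lemma sqnorm_tadd_le k (x y : k.-tuple R) :
  sqnorm (tadd x y) <= 2 * sqnorm x + 2 * sqnorm y.
Proof.
rewrite /sqnorm !mulr_sumr -big_split /=; apply: ler_sum => i _.
rewrite tnth_tadd -subr_ge0.
have -> : 2 * tnth x i ^+ 2 + 2 * tnth y i ^+ 2 - (tnth x i + tnth y i) ^+ 2
  = (tnth x i - tnth y i) ^+ 2 by ring.
exact: sqr_ge0.
Qed.

Lemma sqnorm3_le k (v a b c : k.-tuple R) :
  (forall i, tnth v i = tnth a i + tnth b i - tnth c i) ->
  sqnorm v <= 3 * sqnorm a + 3 * sqnorm b + 3 * sqnorm c.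
Proof.
move=> Hv; rewrite /sqnorm !mulr_sumr -!big_split /=; apply: ler_sum => i _.
rewrite Hv -subr_ge0.
have -> : 3 * tnth a i ^+ 2 + 3 * tnth b i ^+ 2 + 3 * tnth c i ^+ 2
   - (tnth a i + tnth b i - tnth c i) ^+ 2
  = (tnth a i - tnth b i) ^+ 2 + (tnth a i + tnth c i) ^+ 2
    + (tnth b i + tnth c i) ^+ 2 by ring.
by rewrite !addr_ge0 // sqr_ge0.
Qed.

Lemma key_id k (u a cx cn b : k.-tuple R) :
  (forall i, tnth b i = tnth a i + tnth cx i - tnth cn i) ->
  sqnorm (tsub u b) + sqnorm a + sqnorm (tadd u cx) + sqnorm cn =
  sqnorm (tsub u a) + sqnorm b + sqnorm (tadd u cn) + sqnorm cx.
Proof.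
move=> Hb; rewrite /sqnorm -!big_split /=; apply: eq_bigr => i _.
rewrite !tnth_tsub !tnth_tadd Hb; ring.
Qed.

Lemma b_comp p k (W : 'M[R]_(p,k)) (ax xi nu : k.-tuple R) i :
  tnth (tmv W (tsub (tadd (tadd ax xi) (tadd ax xi)) (tadd (tadd ax xi) nu))) i =
  tnth (tmv W ax) i + tnth (tmv W xi) i - tnth (tmv W nu) i.
Proof.
rewrite !tnth_tmv -big_split -sumrB /=; apply: eq_bigr => j _.
rewrite !tnth_tsub !tnth_tadd; ring.
Qed.

Lemma tadd_swap k (a x y : k.-tuple R) :
  tadd (tadd a x) y = tadd (tadd a y) x.
Proof. by apply: eq_from_tnth => i; rewrite !tnth_tadd addrAC. Qed.

End alg.

Section integ.
Context (R : realType) (d0 : measure_display) (T0 : measurableType d0).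
Variable mu : {measure set T0 -> \bar R}.

Lemma intZ (c : R) (h : T0 -> R) : 0 <= c -> measurable_fun setT h ->
  (forall t, 0 <= h t) ->
  (\int[mu]_t (c * h t)%:E = c%:E * \int[mu]_t (h t)%:E)%E.
Proof.
move=> c0 mh h0; under eq_integral do rewrite EFinM.
apply: ge0_integralZl_EFin => //.
- by move=> t _; rewrite lee_fin.
- exact/measurable_EFinP.
Qed.

Lemma intD (h1 h2 : T0 -> R) : measurable_fun setT h1 -> measurable_fun setT h2 ->
  (forall t, 0 <= h1 t) -> (forall t, 0 <= h2 t) ->
  (\int[mu]_t (h1 t + h2 t)%:E = \int[mu]_t (h1 t)%:E + \int[mu]_t (h2 t)%:E)%E.
Proof.
move=> m1 m2 p1 p2; under eq_integral do rewrite EFinD.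
apply: ge0_integralD => //.
- by move=> t _; rewrite lee_fin.
- exact/measurable_EFinP.
- by move=> t _; rewrite lee_fin.
- exact/measurable_EFinP.
Qed.

Lemma int_fin (g h1 h2 h3 : T0 -> R) (c1 c2 c3 : R) :
  measurable_fun setT g -> measurable_fun setT h1 ->
  measurable_fun setT h2 -> measurable_fun setT h3 ->
  (forall t, 0 <= g t) ->
  (forall t, 0 <= h1 t) -> (forall t, 0 <= h2 t) -> (forall t, 0 <= h3 t) ->
  0 <= c1 -> 0 <= c2 -> 0 <= c3 ->
  (forall t, g t <= c1 * h1 t + c2 * h2 t + c3 * h3 t) ->
  (\int[mu]_t (h1 t)%:E < +oo)%E -> (\int[mu]_t (h2 t)%:E < +oo)%E ->
  (\int[mu]_t (h3 t)%:E < +oo)%E ->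
  (\int[mu]_t (g t)%:E < +oo)%E.
Proof.
move=> mg m1 m2 m3 g0 p1 p2 p3 c10 c20 c30 le f1 f2 f3.
have mc1 : measurable_fun setT (fun t => c1 * h1 t) by apply: measurable_funM.
have mc2 : measurable_fun setT (fun t => c2 * h2 t) by apply: measurable_funM.
have mc3 : measurable_fun setT (fun t => c3 * h3 t) by apply: measurable_funM.
apply: (@le_lt_trans _ _ (\int[mu]_t (c1 * h1 t + c2 * h2 t + c3 * h3 t)%:E)%E).
  apply: ge0_le_integral => //.
  - by move=> t _; rewrite lee_fin.
  - exact/measurable_EFinP.
  - apply/measurable_EFinP; apply: measurable_funD => //; exact: measurable_funD.
  - by move=> t _; rewrite lee_fin.
rewrite intD //; last 3 first.
- by apply: measurable_funD.
- by move=> t; apply: addr_ge0; apply: mulr_ge0.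
- by move=> t; apply: mulr_ge0.
rewrite intD //; last 2 first.
- by move=> t; apply: mulr_ge0.
- by move=> t; apply: mulr_ge0.
rewrite !intZ //.
by rewrite !lte_add_pinfty // lte_mul_pinfty.
Qed.

Lemma int_ge0 (h : T0 -> R) : (forall t, 0 <= h t) ->
  (0 <= \int[mu]_t (h t)%:E)%E.
Proof. by move=> h0; apply: integral_ge0 => t _; rewrite lee_fin. Qed.


Lemma int4 (s1 s2 s3 s4 : T0 -> R) :
  measurable_fun setT s1 -> measurable_fun setT s2 ->
  measurable_fun setT s3 -> measurable_fun setT s4 ->
  (forall t, 0 <= s1 t) -> (forall t, 0 <= s2 t) ->
  (forall t, 0 <= s3 t) -> (forall t, 0 <= s4 t) ->
  (\int[mu]_t (s1 t + s2 t + s3 t + s4 t)%:E =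
   \int[mu]_t (s1 t)%:E + \int[mu]_t (s2 t)%:E + \int[mu]_t (s3 t)%:E
   + \int[mu]_t (s4 t)%:E)%E.
Proof.
move=> m1 m2 m3 m4 p1 p2 p3 p4.
rewrite intD //; last 2 first.
- by apply: measurable_funD => //; apply: measurable_funD.
- by move=> t; rewrite !addr_ge0.
rewrite intD //; last 2 first.
- by apply: measurable_funD.
- by move=> t; rewrite !addr_ge0.
by rewrite intD.
Qed.
End integ.

Section ex.
Context (R : realType) (d0 : measure_display) (T0 : measurableType d0).
Context (dv : measure_display) (V : measurableType dv).
Variable mu : {measure set T0 -> \bar R}.

Lemma exch_int (phi1 phi2 : T0 -> V) (H : V -> R) :
  measurable_fun setT phi1 -> measurable_fun setT phi2 ->
  (forall S, measurable S -> mu (phi1 @^-1` S) = mu (phi2 @^-1` S)) ->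
  measurable_fun setT H -> (forall v, 0 <= H v) ->
  (\int[mu]_t (H (phi1 t))%:E = \int[mu]_t (H (phi2 t))%:E)%E.
Proof.
move=> m1 m2 e mH H0.
have mEH : measurable_fun setT (fun v => (H v)%:E) by exact/measurable_EFinP.
have H0' : {in setT, forall v, (0 <= (H v)%:E)%E} by move=> v _; rewrite lee_fin.
have e1 := @ge0_integral_pushforward _ _ _ _ R phi1 m1 mu setT
  (fun v => (H v)%:E) measurableT mEH H0'.
have e2 := @ge0_integral_pushforward _ _ _ _ R phi2 m2 mu setT
  (fun v => (H v)%:E) measurableT mEH H0'.
rewrite preimage_setT in e1 e2.
rewrite -[LHS]e1 -[RHS]e2.
apply: eq_measure_integral => A mA _.
exact: e.
Qed.
End ex.

Theorem theorem1 (R : realType) (d : measure_display) (T : measurableType d)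
  (P : probability T R) (m n q : nat)
  (A : 'M[R]_(m, n)) (W : 'M[R]_(q, m))
  (Bs : m.-tuple R -> n.-tuple R) (mBs : measurable_fun setT Bs)
  (X : T -> n.-tuple R) (Xi N : T -> m.-tuple R)
  (mX : measurable_fun setT X) (mXi : measurable_fun setT Xi)
  (mN : measurable_fun setT N)
  (X2 : (\int[P]_t (sqnorm (X t))%:E < +oo)%E)
  (Xi2 : (\int[P]_t (sqnorm (Xi t))%:E < +oo)%E)
  (N2 : (\int[P]_t (sqnorm (N t))%:E < +oo)%E)
  (exch : forall S : set ((n.-tuple R * m.-tuple R) * m.-tuple R),
     measurable S ->
     P ((fun t => (X t, Xi t, N t)) @^-1` S) =
     P ((fun t => (X t, N t, Xi t)) @^-1` S)) :
  let Y := fun t => tadd (tmv A (X t)) (Xi t) in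
  let Z := fun t => tadd (Y t) (N t) in
  let F := [set f : n.-tuple R -> n.-tuple R | measurable_fun setT f /\
             (\int[P]_t (sqnorm (tmv W (tmv A (f (Bs (Z t))))))%:E < +oo)%E] in
  let L1 := fun f : n.-tuple R -> n.-tuple R =>
    (\int[P]_t (sqnorm (tsub (tmv W (tmv A (f (Bs (Z t)))))
                             (tmv W (tmv A (X t)))))%:E)%E in
  let L2 := fun f : n.-tuple R -> n.-tuple R =>
    (\int[P]_t (sqnorm (tsub (tmv W (tmv A (f (Bs (Z t)))))
                             (tmv W (tsub (tadd (Y t) (Y t)) (Z t)))))%:E)%E in
  [set f | F f /\ forall g, F g -> (L1 f <= L1 g)%E] =
  [set f | F f /\ forall g, F g -> (L2 f <= L2 g)%E] /\
  forall f, F f ->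
    L2 f = (L1 f - \int[P]_t (sqnorm (tmv W (tmv A (X t))))%:E
            + \int[P]_t (sqnorm (tmv W (tsub (tadd (Y t) (Y t)) (Z t))))%:E)%E.
Proof.
move=> Y Z F L1 L2.
set cW := cM W; set cA := cM A.
have cW0 : 0 <= cW by exact: cM_ge0.
have cA0 : 0 <= cA by exact: cM_ge0.
have mAX : measurable_fun setT (fun t => tmv A (X t)) by exact: m_tmv.
have mY : measurable_fun setT Y by exact: m_tadd.
have mZ : measurable_fun setT Z by exact: m_tadd.
have ma : measurable_fun setT (fun t => tmv W (tmv A (X t))) by exact: m_tmv.
have mb : measurable_fun setT (fun t => tmv W (tsub (tadd (Y t) (Y t)) (Z t))).
  by apply: m_tmv; apply: m_tsub => //; exact: m_tadd.
have mcx : measurable_fun setT (fun t => tmv W (Xi t)) by exact: m_tmv.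
have mcn : measurable_fun setT (fun t => tmv W (N t)) by exact: m_tmv.
have sX := m_sqnorm mX; have sXi := m_sqnorm mXi; have sN := m_sqnorm mN.
have AXle : forall t, sqnorm (tmv W (tmv A (X t))) <= (cW * cA) * sqnorm (X t).
  move=> t; apply: le_trans; first exact: sqnorm_tmv_le.
  by rewrite -mulrA ler_wpM2l // sqnorm_tmv_le.
have Eafin : (\int[P]_t (sqnorm (tmv W (tmv A (X t))))%:E < +oo)%E.
  apply: (@int_fin _ _ _ _ _ (fun t => sqnorm (X t)) (fun t => sqnorm (X t))
     (fun t => sqnorm (X t)) (cW * cA) 0 0) => //.
  - exact: m_sqnorm.
  - by move=> t; exact: sqnorm_ge0.
  - by move=> t; exact: sqnorm_ge0.
  - by move=> t; exact: sqnorm_ge0.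
  - by move=> t; exact: sqnorm_ge0.
  - exact: mulr_ge0.
  - by move=> t; rewrite !mul0r !addr0.
have c30 : (0 : R) <= 3 by rewrite ler0n.
have c3W : 0 <= 3 * cW by apply: mulr_ge0.
have c3WA : 0 <= 3 * cW * cA by apply: mulr_ge0.
have Ebfin : (\int[P]_t (sqnorm (tmv W (tsub (tadd (Y t) (Y t)) (Z t))))%:E < +oo)%E.
  apply: (@int_fin _ _ _ _ _ (fun t => sqnorm (X t)) (fun t => sqnorm (Xi t))
     (fun t => sqnorm (N t)) (3 * cW * cA) (3 * cW) (3 * cW));
    try exact: m_sqnorm; try (by move=> t; exact: sqnorm_ge0);
    try done.
  - move=> t; apply: le_trans; first exact: sqnorm_tmv_le.
    have H3 := @sqnorm3_le R m (tsub (tadd (Y t) (Y t)) (Z t)) (tmv A (X t)) (Xi t) (N t).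
    have := H3 (fun i => ltac:(rewrite /Y /Z !tnth_tsub !tnth_tadd; ring)).
    move=> H3'.
    apply: le_trans; first exact: (ler_wpM2l cW0 H3').
    have HA := sqnorm_tmv_le A (X t).
    rewrite -/cA in HA.
    have Xi0 := sqnorm_ge0 (Xi t).
    rewrite (_ : 3 * cW * cA * sqnorm (X t) + 3 * cW * sqnorm (Xi t)
       + 3 * cW * sqnorm (N t) = cW * (3 * (cA * sqnorm (X t)) + 3 * sqnorm (Xi t)
       + 3 * sqnorm (N t))); last by ring.
    apply: ler_wpM2l => //; rewrite !lerD2r; exact: ler_wpM2l.
have Eafn : (\int[P]_t (sqnorm (tmv W (tmv A (X t))))%:E)%E \is a fin_num.
  by rewrite ge0_fin_numE // int_ge0 // => t; exact: sqnorm_ge0.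
have Ebfn : (\int[P]_t (sqnorm (tmv W (tsub (tadd (Y t) (Y t)) (Z t))))%:E)%E \is a fin_num.
  by rewrite ge0_fin_numE // int_ge0 // => t; exact: sqnorm_ge0.
have key : forall f, F f ->
    L2 f = (L1 f - \int[P]_t (sqnorm (tmv W (tmv A (X t))))%:E
            + \int[P]_t (sqnorm (tmv W (tsub (tadd (Y t) (Y t)) (Z t))))%:E)%E.
  move=> f [mf uf].
  have mu' : measurable_fun setT (fun t => tmv W (tmv A (f (Bs (Z t))))).
    apply: m_tmv; apply: m_tmv; apply: (measurableT_comp mf).
    exact: (measurableT_comp mBs).
  have su := m_sqnorm mu'.
  have EI := @int4 _ _ _ P
    (fun t => sqnorm (tsub (tmv W (tmv A (f (Bs (Z t))))) (tmv W (tsub (tadd (Y t) (Y t)) (Z t)))))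
    (fun t => sqnorm (tmv W (tmv A (X t))))
    (fun t => sqnorm (tadd (tmv W (tmv A (f (Bs (Z t))))) (tmv W (Xi t))))
    (fun t => sqnorm (tmv W (N t)))
    (m_sqnorm (m_tsub mu' mb)) (m_sqnorm ma) (m_sqnorm (m_tadd mu' mcx)) (m_sqnorm mcn)
    (fun t => sqnorm_ge0 _) (fun t => sqnorm_ge0 _) (fun t => sqnorm_ge0 _) (fun t => sqnorm_ge0 _).
  have EI' := @int4 _ _ _ P
    (fun t => sqnorm (tsub (tmv W (tmv A (f (Bs (Z t))))) (tmv W (tmv A (X t)))))
    (fun t => sqnorm (tmv W (tsub (tadd (Y t) (Y t)) (Z t))))
    (fun t => sqnorm (tadd (tmv W (tmv A (f (Bs (Z t))))) (tmv W (N t))))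
    (fun t => sqnorm (tmv W (Xi t)))
    (m_sqnorm (m_tsub mu' ma)) (m_sqnorm mb) (m_sqnorm (m_tadd mu' mcn)) (m_sqnorm mcx)
    (fun t => sqnorm_ge0 _) (fun t => sqnorm_ge0 _) (fun t => sqnorm_ge0 _) (fun t => sqnorm_ge0 _).
  have EQ : (\int[P]_t (sqnorm (tsub (tmv W (tmv A (f (Bs (Z t))))) (tmv W (tsub (tadd (Y t) (Y t)) (Z t))))
     + sqnorm (tmv W (tmv A (X t)))
     + sqnorm (tadd (tmv W (tmv A (f (Bs (Z t))))) (tmv W (Xi t)))
     + sqnorm (tmv W (N t)))%:E =
     \int[P]_t (sqnorm (tsub (tmv W (tmv A (f (Bs (Z t))))) (tmv W (tmv A (X t))))
     + sqnorm (tmv W (tsub (tadd (Y t) (Y t)) (Z t)))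
     + sqnorm (tadd (tmv W (tmv A (f (Bs (Z t))))) (tmv W (N t)))
     + sqnorm (tmv W (Xi t)))%:E)%E.
    apply: eq_integral => t _; rewrite key_id // => i.
    exact: b_comp.
  rewrite EI EI' {EI EI'} in EQ.
  have m1 : measurable_fun setT (fun t => (X t, Xi t, N t)).
    by apply: measurable_fun_pair => //; exact: measurable_fun_pair.
  have m2 : measurable_fun setT (fun t => (X t, N t, Xi t)).
    by apply: measurable_fun_pair => //; exact: measurable_fun_pair.
  have p11 : measurable_fun setT
      (fun p : (n.-tuple R * m.-tuple R) * m.-tuple R => p.1.1).
    by apply: (measurableT_comp (f := fst) (g := fst)).
  have p12 : measurable_fun setT
      (fun p : (n.-tuple R * m.-tuple R) * m.-tuple R => p.1.2).
    by apply: (measurableT_comp (f := snd) (g := fst)).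
  have p2 : measurable_fun setT
      (fun p : (n.-tuple R * m.-tuple R) * m.-tuple R => p.2) by exact: measurable_snd.
  have K12 := @exch_int _ _ _ _ _ P _ _
    (fun p : (n.-tuple R * m.-tuple R) * m.-tuple R =>
       sqnorm (tadd (tmv W (tmv A (f (Bs (tadd (tadd (tmv A p.1.1) p.1.2) p.2)))))
                    (tmv W p.1.2))) m1 m2 exch.
  have K12' := K12 ltac:(apply: m_sqnorm; apply: m_tadd; last exact: m_tmv;
      apply: m_tmv; apply: m_tmv; apply: (measurableT_comp mf);
      apply: (measurableT_comp mBs); apply: m_tadd => //;
      apply: m_tadd => //; exact: m_tmv) (fun v => sqnorm_ge0 _).
  simpl in K12'.
  have Knx := @exch_int _ _ _ _ _ P _ _
    (fun p : (n.-tuple R * m.-tuple R) * m.-tuple R => sqnorm (tmv W p.2))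
    m1 m2 exch (m_sqnorm (m_tmv W p2)) (fun v => sqnorm_ge0 _).
  simpl in Knx.
  have K3 : (\int[P]_t (sqnorm (tadd (tmv W (tmv A (f (Bs (Z t))))) (tmv W (Xi t))))%:E
     = \int[P]_t (sqnorm (tadd (tmv W (tmv A (f (Bs (Z t))))) (tmv W (N t))))%:E)%E.
    transitivity (\int[P]_t
        (sqnorm (tadd (tmv W (tmv A (f (Bs (tadd (tadd (tmv A (X t)) (N t)) (Xi t))))))
              (tmv W (N t))))%:E)%E; first exact: K12'.
    by apply: eq_integral => t _; rewrite tadd_swap.
  have fK1 : (\int[P]_t (sqnorm (tadd (tmv W (tmv A (f (Bs (Z t))))) (tmv W (Xi t))))%:E
     < +oo)%E.
    apply: (@int_fin _ _ _ _ _ (fun t => sqnorm (tmv W (tmv A (f (Bs (Z t))))))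
       (fun t => sqnorm (Xi t)) (fun t => sqnorm (Xi t)) 2 (2 * cW) 0);
      try exact: m_sqnorm; try (by move=> t; exact: sqnorm_ge0); try done.
    - exact: m_sqnorm (m_tadd mu' mcx).
    - by apply: mulr_ge0.
    - move=> t; rewrite mul0r addr0.
      apply: le_trans; first exact: sqnorm_tadd_le.
      rewrite lerD2l -mulrA ler_wpM2l //; exact: sqnorm_tmv_le.
  have fKx : (\int[P]_t (sqnorm (tmv W (Xi t)))%:E < +oo)%E.
    apply: (@int_fin _ _ _ _ _ (fun t => sqnorm (Xi t))
       (fun t => sqnorm (Xi t)) (fun t => sqnorm (Xi t)) cW 0 0);
      try exact: m_sqnorm; try (by move=> t; exact: sqnorm_ge0); try done.
    move=> t; rewrite !mul0r !addr0; exact: sqnorm_tmv_le.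
  have fn1 : (\int[P]_t (sqnorm (tadd (tmv W (tmv A (f (Bs (Z t))))) (tmv W (N t))))%:E)%E
      \is a fin_num.
    by rewrite -K3 ge0_fin_numE // int_ge0 // => t; exact: sqnorm_ge0.
  have fnx : (\int[P]_t (sqnorm (tmv W (Xi t)))%:E)%E \is a fin_num.
    by rewrite ge0_fin_numE // int_ge0 // => t; exact: sqnorm_ge0.
  rewrite K3 Knx in EQ.
  have canc : forall x y c : \bar R, c \is a fin_num -> (x + c = y + c -> x = y)%E.
    by move=> x y c fc e; rewrite -(@addeK _ c x fc) e addeK.
  move/(canc _ _ _ fnx)/(canc _ _ _ fn1) in EQ.
  rewrite /L1 /L2.
  rewrite -[LHS](@addeK _ _ _ Eafn) EQ addeAC //.
split; last exact: key.
apply/seteqP; split => f [Ff Hf]; split => // g Fg; have := Hf g Fg;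
  rewrite !key // leeD2rE // leeD2rE // fin_numN.
all: by rewrite ?fin_numN.
Qed.
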